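(* Let $\{(X_i,d_i)\}_{i\in\mathbb{N}_0}$ be complete metric spaces, $C_i\subseteq X_i$ nonempty compact sets with $\mathrm{diam}(C_i)\le D$ for all $i$, and $T_i:X_i\to X_{i-1}$ ($i\in\mathbb{N}$) continuous maps with $T_i(C_i)\subseteq C_{i-1}$ and $s_i:=\mathrm{Lip}_{C_i}(T_i)<\infty$. If $\sum_{k=1}^\infty\prod_{i=1}^k s_i<\infty$, then there is a point $p\in C_0$ such that for every base sequence $\bar x$ the backward staircase trajectory $p_k(\bar x)$ converges to $p$.
   Context: For $T:X\to Y$ between metric spaces and $C\subseteq X$, $\mathrm{Lip}_C(T)=\sup_{a,b\in C,a\neq b}d_Y(T(a),T(b))/d_X(a,b)$. A base sequence is $\bar x=\{x_i\}_{i\in\mathbb{N}}$ with $x_i\in C_i$, and the backward staircase trajectory with respect to $\bar x$ is $p_k(\bar x)=T_1\circ T_2\circ\cdots\circ T_k(x_k)\in X_0$, $k\in\mathbb{N}$. *)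

(* Defs.v *)
From Stdlib Require Import Reals List.
Open Scope R_scope.

Definition ms_open {X : Metric_Space} (U : Base X -> Prop) : Prop :=
  forall x, U x -> exists r, r > 0 /\ forall y, dist X x y < r -> U y.

Definition ms_compact {X : Metric_Space} (C : Base X -> Prop) : Prop :=
  forall (I : Type) (U : I -> Base X -> Prop),
    (forall i, ms_open (U i)) ->
    (forall x, C x -> exists i, U i x) ->
    exists l : list I, forall x, C x -> exists i, In i l /\ U i x.

Definition ms_cauchy {X : Metric_Space} (u : nat -> Base X) : Prop :=
  forall eps, eps > 0 -> exists N, forall n m, (n >= N)%nat -> (m >= N)%nat ->
    dist X (u n) (u m) < eps.

Definition ms_converges {X : Metric_Space} (u : nat -> Base X) (l : Base X) : Prop :=
  forall eps, eps > 0 -> exists N, forall n, (n >= N)%nat -> dist X (u n) l < eps.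

Definition ms_complete (X : Metric_Space) : Prop :=
  forall u : nat -> Base X, ms_cauchy u -> exists l, ms_converges u l.

Definition ms_continuous {X Y : Metric_Space} (f : Base X -> Base Y) : Prop :=
  forall x eps, eps > 0 -> exists delta, delta > 0 /\
    forall y, dist X x y < delta -> dist Y (f x) (f y) < eps.

Definition diam_le {X : Metric_Space} (C : Base X -> Prop) (D : R) : Prop :=
  forall a b, C a -> C b -> dist X a b <= D.

(* s = Lip_C(T) = sup_{a,b in C, a<>b} d(T a, T b)/d(a, b), with the convention
   that the sup of the empty set of ratios (C a singleton) is 0; adding 0 to the
   set of (nonnegative) ratios does not change the sup otherwise. *)
Definition Lip_set {X Y : Metric_Space} (T : Base X -> Base Y) (C : Base X -> Prop)
  : R -> Prop :=
  fun r => r = 0 \/ exists a b, C a /\ C b /\ a <> b /\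
                    r = dist Y (T a) (T b) / dist X a b.

Definition is_Lip_const {X Y : Metric_Space} (T : Base X -> Base Y)
  (C : Base X -> Prop) (s : R) : Prop := is_lub (Lip_set T C) s.

(* prodS s k = s 0 * ... * s (k-1);  with s j = s_{j+1} this is prod_{i=1}^k s_i *)
Fixpoint prodS (s : nat -> R) (k : nat) : R :=
  match k with
  | O => 1
  | S k' => prodS s k' * s k'
  end.

(* Maps T k : X (k+1) -> X k  (this is T_{k+1} of the paper).
   compT T k y = T_1 (T_2 (... T_k y)) *)
Fixpoint compT (X : nat -> Metric_Space)
  (T : forall i, Base (X (S i)) -> Base (X i)) (k : nat) : Base (X k) -> Base (X O) :=
  match k as k0 return Base (X k0) -> Base (X O) with
  | O => fun y => y
  | S k' => fun y => compT X T k' (T k' y)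
  end.

Definition staircase (X : nat -> Metric_Space)
  (T : forall i, Base (X (S i)) -> Base (X i)) (x : forall i, Base (X i)) (k : nat)
  : Base (X O) := compT X T k (x k).

(* Main.v *)
Require Import Defs.
From Stdlib Require Import Reals List Lra Lia ZArith Classical ClassicalEpsilon.
Open Scope R_scope.

Lemma dist_pos0 (X : Metric_Space) (a b : Base X) (h : a <> b) : dist X a b > 0.
Proof.
  destruct (dist_pos X a b) as [H|H]; [lra|].
  exfalso; apply h; apply (dist_refl X); exact H.
Qed.

Lemma lip_bound (X Y : Metric_Space) (T : Base X -> Base Y) (C : Base X -> Prop) s :
  is_Lip_const T C s -> 0 <= s /\
  forall a b, C a -> C b -> dist Y (T a) (T b) <= s * dist X a b.
Proof.
  intros [Hub _]. split.
  - apply Hub. left; reflexivity.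
  - intros a b Ha Hb. destruct (classic (a = b)) as [->|Hne].
    + replace (dist Y (T b) (T b)) with 0 by (symmetry; apply (dist_refl Y); reflexivity).
      replace (dist X b b) with 0 by (symmetry; apply (dist_refl X); reflexivity). lra.
    + assert (Hd := dist_pos0 X a b Hne).
      assert (Hr : dist Y (T a) (T b) / dist X a b <= s).
      { apply Hub. right. exists a, b. repeat split; auto. }
      apply Rmult_le_compat_r with (r := dist X a b) in Hr; [|lra].
      unfold Rdiv in Hr. rewrite Rmult_assoc, Rinv_l in Hr by lra. lra.
Qed.

Theorem mainTheorem7
  (X : nat -> Metric_Space)
  (C : forall i, Base (X i) -> Prop)
  (D : R)
  (T : forall i, Base (X (S i)) -> Base (X i))
  (s : nat -> R)
  (Hcomplete : forall i, ms_complete (X i))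
  (Hnonempty : forall i, exists x, C i x)
  (Hcompact : forall i, ms_compact (C i))
  (Hdiam : forall i, diam_le (C i) D)
  (Hcont : forall i, ms_continuous (T i))
  (Hmaps : forall i y, C (S i) y -> C i (T i y))
  (Hlip : forall i, is_Lip_const (T i) (C (S i)) (s i))
  (Hsum : exists l, Un_cv (fun n => sum_f_R0 (fun k => prodS s (S k)) n) l) :
  exists p : Base (X O), C O p /\
    forall x : forall i, Base (X i), (forall i, C i (x i)) ->
      ms_converges (staircase X T x) p.
Proof.
  assert (Hs0 : forall i, 0 <= s i) by (intro i; apply (lip_bound _ _ _ _ _ (Hlip i))).
  assert (Hp0 : forall k, 0 <= prodS s k).
  { induction k; simpl; [lra|]. apply Rmult_le_pos; auto. }
  assert (HD : 0 <= D).
  { destruct (Hnonempty O) as [a Ha]. eapply Rle_trans; [|apply (Hdiam O a a Ha Ha)].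
    destruct (dist_pos (X O) a a); lra. }
  assert (HC0 : forall k y, C k y -> C O (compT X T k y)).
  { induction k; simpl; auto. }
  assert (Hcomp : forall k a b, C k a -> C k b ->
            dist (X O) (compT X T k a) (compT X T k b) <= prodS s k * dist (X k) a b).
  { induction k; intros a b Ha Hb; simpl.
    - lra.
    - eapply Rle_trans; [apply IHk; auto|].
      destruct (lip_bound _ _ _ _ _ (Hlip k)) as [_ HL].
      rewrite Rmult_assoc. apply Rmult_le_compat_l; auto. }
  assert (Hstep : forall x, (forall i, C i (x i)) -> forall k,
            dist (X O) (staircase X T x k) (staircase X T x (S k)) <= prodS s k * D).
  { intros x Hx k. unfold staircase. simpl.
    eapply Rle_trans; [apply Hcomp; auto|].
    apply Rmult_le_compat_l; auto. apply Hdiam; auto. }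
  assert (Hsame : forall x y, (forall i, C i (x i)) -> (forall i, C i (y i)) -> forall k,
            dist (X O) (staircase X T x k) (staircase X T y k) <= prodS s k * D).
  { intros x y Hx Hy k. unfold staircase.
    eapply Rle_trans; [apply Hcomp; auto|].
    apply Rmult_le_compat_l; auto. apply Hdiam; auto. }
  destruct Hsum as [l Hl].
  set (Sm := fun n => sum_f_R0 (fun k => prodS s (S k)) n) in *.
  assert (HCc : Cauchy_crit Sm) by (apply CV_Cauchy; exists l; exact Hl).
  assert (Hmono : forall n m, (n <= m)%nat -> Sm n <= Sm m).
  { intros n m Hnm. induction Hnm; [lra|].
    change (Sm (S m)) with (Sm m + prodS s (S (S m))). specialize (Hp0 (S (S m))). lra. }
  assert (Htend : forall eps, eps > 0 -> exists N, forall n, (n >= N)%nat -> prodS s n < eps).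
  { intros eps He. destruct (HCc eps He) as [N HN]. exists (S (S N)). intros n Hn.
    destruct n as [|[|j]]; try lia.
    specialize (HN (S j) j ltac:(lia) ltac:(lia)). unfold R_dist in HN.
    change (Sm (S j)) with (Sm j + prodS s (S (S j))) in HN.
    replace (Sm j + prodS s (S (S j)) - Sm j) with (prodS s (S (S j))) in HN by ring.
    rewrite Rabs_right in HN; [lra|]. specialize (Hp0 (S (S j))). lra. }
  assert (Hx0 : {x0 : forall i, Base (X i) | forall i, C i (x0 i)}).
  { exists (fun i => proj1_sig (constructive_indefinite_description _ (Hnonempty i))).
    intro i. exact (proj2_sig (constructive_indefinite_description _ (Hnonempty i))). }
  destruct Hx0 as [x0 Hx0].
  set (q := fun n => staircase X T x0 (S (S n))).
  assert (Hqd : forall n m, (n <= m)%nat -> dist (X O) (q n) (q m) <= D * (Sm m - Sm n)).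
  { intros n m Hnm. induction Hnm.
    - replace (dist (X O) (q n) (q n)) with 0 by (symmetry; apply (dist_refl (X O)); reflexivity). lra.
    - eapply Rle_trans; [apply (dist_tri (X O) _ _ (q m))|].
      assert (H2 := Hstep x0 Hx0 (S (S m))).
      replace (Sm (S m)) with (Sm m + prodS s (S (S m))) by reflexivity.
      unfold q. unfold q in IHHnm. lra. }
  assert (Hqc : ms_cauchy q).
  { intros eps He.
    destruct (HCc (eps / (D + 1))) as [N HN].
    { apply Rdiv_lt_0_compat; lra. }
    exists N. intros n m Hn Hm.
    assert (Hlt : D * (eps / (D + 1)) < eps).
    { unfold Rdiv. rewrite <- Rmult_assoc.
      apply Rmult_lt_reg_r with (D + 1); [lra|].
      rewrite Rmult_assoc, Rinv_l by lra. nra. }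
    destruct (Nat.le_ge_cases n m) as [Hnm|Hnm].
    - eapply Rle_lt_trans; [apply Hqd; auto|].
      specialize (HN m n Hm Hn). unfold R_dist in HN.
      rewrite Rabs_right in HN by (apply Rle_ge; specialize (Hmono n m Hnm); lra).
      eapply Rle_lt_trans; [|exact Hlt]. apply Rmult_le_compat_l; lra.
    - rewrite dist_sym.
      eapply Rle_lt_trans; [apply Hqd; lia|].
      specialize (HN n m Hn Hm). unfold R_dist in HN.
      rewrite Rabs_right in HN by (apply Rle_ge; specialize (Hmono m n Hnm); lra).
      eapply Rle_lt_trans; [|exact Hlt]. apply Rmult_le_compat_l; lra. }
  destruct (Hcomplete O q Hqc) as [p Hp].
  assert (HqC : forall n, C O (q n)).
  { intro n. unfold q, staircase. apply HC0; auto. }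
  exists p. split.
  - (* closedness via compactness *)
    apply NNPP. intro Hnp.
    set (U := fun (n : nat) (z : Base (X O)) => dist (X O) z p > / INR (S n)).
    destruct (Hcompact O nat U) as [L HL].
    + intros n z Hz. exists (dist (X O) z p - / INR (S n)). split; [unfold U in Hz; lra|].
      intros y Hy. unfold U in *.
      assert (Ht := dist_tri (X O) z p y).
      assert (Ht2 := dist_tri (X O) z y p). lra.
    + intros z Hz. assert (Hzp : z <> p) by (intro; subst; auto).
      assert (Hd := dist_pos0 _ _ _ Hzp).
      destruct (archimed (/ dist (X O) z p)) as [Ha _].
      destruct (Rle_or_lt (IZR (up (/ dist (X O) z p))) 0) as [Hle|Hgt].
      * exfalso. assert (0 < / dist (X O) z p) by (apply Rinv_0_lt_compat; lra). lra.
      * exists (Z.to_nat (up (/ dist (X O) z p))). unfold U.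
        assert (Hup : (0 < up (/ dist (X O) z p))%Z) by (apply lt_IZR; lra).
        rewrite S_INR, INR_IZR_INZ, Z2Nat.id by lia.
        rewrite <- (Rinv_inv (dist (X O) z p)) at 1.
        apply Rinv_lt_contravar.
        -- apply Rmult_lt_0_compat; [apply Rinv_0_lt_compat; lra|lra].
        -- lra.
    + set (M := fold_right Nat.max O L).
      assert (HM : forall i, In i L -> (i <= M)%nat).
      { unfold M. clear. induction L; simpl; intros i Hi; [contradiction|].
        destruct Hi as [->|Hi]; [lia|]. specialize (IHL i Hi). lia. }
      destruct (Hp (/ INR (S M))) as [N HN].
      { apply Rinv_0_lt_compat, lt_0_INR; lia. }
      destruct (HL (q N) (HqC N)) as [i [Hi HU]].
      specialize (HN N (le_n N)). unfold U in HU.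
      assert (/ INR (S M) <= / INR (S i)).
      { apply Rinv_le_contravar; [apply lt_0_INR; lia|]. apply le_INR.
        specialize (HM i Hi). lia. }
      lra.
  - intros x Hx eps He.
    destruct (Hp (eps / 2)) as [N1 HN1]; [lra|].
    destruct (Htend (eps / 2 / (D + 1))) as [N2 HN2].
    { apply Rdiv_lt_0_compat; lra. }
    exists (S (S (N1 + N2))). intros n Hn.
    destruct n as [|[|k]]; try lia.
    eapply Rle_lt_trans; [apply (dist_tri (X O) _ _ (staircase X T x0 (S (S k))))|].
    assert (H1 := HN1 k ltac:(lia)). unfold q in H1.
    assert (H2 := Hsame x x0 Hx Hx0 (S (S k))).
    assert (H3 := HN2 (S (S k)) ltac:(lia)).
    assert (H4 : prodS s (S (S k)) * D <= eps / 2 / (D + 1) * D).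
    { apply Rmult_le_compat_r; lra. }
    assert (H5 : eps / 2 / (D + 1) * D < eps / 2).
    { unfold Rdiv. apply Rmult_lt_reg_r with (D + 1); [lra|].
      rewrite !Rmult_assoc. rewrite (Rmult_comm D (D+1)).
      rewrite <- (Rmult_assoc (/ (D+1))), Rinv_l by lra. nra. }
    lra.
Qed.
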